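(* Let $X$ be a real linear space, $T$ an infinite index set, and $f, f_t : X \to \overline{\mathbb{R}} := \mathbb{R}\cup\{\pm\infty\}$ ($t \in T$) convex proper functions. Consider the problem $(P)$: minimize $f(x)$ subject to $f_t(x)\le 0$ for all $t\in T$, with optimal value $\inf(P)=\inf\{f(x): f_t(x)\le0\ \forall t\in T\}$. Let $h:=\sup_{t\in T} f_t$ and $\Delta_1 := \operatorname{dom} f\cap\operatorname{dom} h$. Assume the strong Slater condition: there exist $\alpha>0$ and $a\in\operatorname{dom} f$ such that $f_t(a)\le-\alpha$ for all $t\in T$. Then the supremum over $s\ge 0$ below is attained and $$\inf(P)=\max_{s\ge0}\inf_{x\in\Delta_1}\big(f(x)+s\,h(x)\big)=\lim_{\varepsilon\downarrow0}\inf\{f(x): f_t(x)\le\varepsilon \text{ for all } t\in T\}.$$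
   Context: $\operatorname{dom} g := \{x : g(x)<+\infty\}$; a proper function never takes the value $-\infty$ and has nonempty domain. Convention: $\inf\emptyset=+\infty$. *)

(* Defs.v *)
From HB Require Import structures.
From mathcomp Require Import all_boot all_order all_algebra.
From mathcomp Require Import all_classical all_reals all_analysis.
Set Implicit Arguments. Unset Strict Implicit. Unset Printing Implicit Defensive.
Import Order.TTheory GRing.Theory Num.Theory.
Local Open Scope classical_set_scope.
Local Open Scope ring_scope.
Local Open Scope ereal_scope.

Section ExtConvex.
Variables (R : realType) (X : lmodType R).

Definition edom (g : X -> \bar R) : set X := [set x | g x < +oo].

Definition eproper (g : X -> \bar R) : Prop :=
  (forall x, g x != -oo) /\ edom g !=set0.

(* convexity (for functions not taking -oo this is convexity of the epigraph),
   with the conventions r * (+oo) = +oo for r > 0 *)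
Definition econvex (g : X -> \bar R) : Prop :=
  forall (x y : X) (l : R), (0 < l < 1)%R ->
    g ((l *: x + (1 - l) *: y)%R) <= (l%:E * g x) + ((1 - l)%:E * g y).

Definition esupfam (T : Type) (F : T -> X -> \bar R) : X -> \bar R :=
  fun x => ereal_sup (range (fun t => F t x)).

Definition pert_value (T : Type) (f : X -> \bar R) (F : T -> X -> \bar R)
  (eps : R) : \bar R :=
  ereal_inf [set f x | x in [set x | forall t, F t x <= eps%:E]].

Definition dual_fun (T : Type) (f : X -> \bar R) (F : T -> X -> \bar R)
  (s : R) : \bar R :=
  ereal_inf [set f x + s%:E * esupfam F x | x in edom f `&` edom (esupfam F)].
End ExtConvex.

(* Main.v *)
Require Import Defs.
From HB Require Import structures.
From mathcomp Require Import all_boot all_order all_algebra.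
From mathcomp Require Import all_classical all_reals all_analysis.
From mathcomp Require Import ring lra.
Import Order.TTheory GRing.Theory Num.Theory numFieldNormedType.Exports.
Local Open Scope classical_set_scope.
Local Open Scope ring_scope.
Local Open Scope ereal_scope.

Lemma fin_of {R : realType} {e : \bar R} : e != -oo -> e < +oo -> exists r, e = r%:E.
Proof. by case: e => [r| |] // _ _; exists r. Qed.

Theorem proposition3p2 (R : realType) (X : lmodType R) (T : Type)
  (f : X -> \bar R) (F : T -> X -> \bar R) :
  infinite_set [set: T] ->
  eproper f -> econvex f ->
  (forall t, eproper (F t)) -> (forall t, econvex (F t)) ->
  (exists alpha : R, exists a : X, (0 < alpha)%R /\ edom f a /\
      (forall t, F t a <= (- alpha)%:E)) ->
  let infP := pert_value f F 0 in
  (exists s0 : R, (0 <= s0)%R /\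
      dual_fun f F s0 = ereal_sup [set dual_fun f F s | s in [set s : R | (0 <= s)%R]]) /\
  infP = ereal_sup [set dual_fun f F s | s in [set s : R | (0 <= s)%R]] /\
  (pert_value f F @ 0%R^'+ --> infP).
Proof.
move=> Tinf [fnm fdom] fcvx Fpr Fcvx [alpha [a [alpha0 [afa Fa]]]] infP.
rewrite {}/infP.
set h := esupfam F.
have [t0 _] : exists t0 : T, True.
  apply: contrapT => nT; apply: Tinf.
  rewrite (_ : [set: T] = set0); first exact: finite_set0.
  by apply/seteqP; split => x // _; apply: nT; exists x.
have hge : forall t x, F t x <= h x.
  by move=> t x; apply: ereal_sup_ubound; exists t.
have hnm : forall x, h x != -oo.
  move=> x; rewrite -ltNye; apply: (@lt_le_trans _ _ (F t0 x)); last exact: hge.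
  by rewrite ltNye; case: (Fpr t0) => ->.
have hcvx : forall x y (l : R), (0 < l < 1)%R ->
    h ((l *: x + (1 - l) *: y)%R) <= l%:E * h x + (1 - l)%:E * h y.
  move=> x y l hl; apply: ge_ereal_sup => _ [t _ <-].
  apply: le_trans (Fcvx t x y l hl) _.
  case/andP: hl => l0 l1.
  by apply: leeD; rewrite lee_pmul2l // ?lte_fin ?subr_gt0 //; exact: hge.
have Ah : h a <= (- alpha)%:E by apply: ge_ereal_sup => _ [t _ <-].
have afeas : forall t, F t a <= 0%:E.
  move=> t; apply: le_trans (Fa t) _; rewrite lee_fin oppr_le0; exact: ltW.
have pmono : forall e : R, (0 <= e)%R -> pert_value f F e <= pert_value f F 0.
  move=> e e0; apply: le_ereal_inf_tmp => _ [x xf <-]; apply: ereal_inf_lbound.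
  by exists x => // t; apply: le_trans (xf t) _; rewrite lee_fin.
have dual_le : forall s : R, (0 <= s)%R -> dual_fun f F s <= pert_value f F 0.
  move=> s s0; apply: le_ereal_inf_tmp => _ [x xf <-].
  have [fxoo|fxlt] := eqVneq (f x) +oo; first by rewrite fxoo leey.
  have hx0 : h x <= 0 by apply: ge_ereal_sup => _ [t _ <-]; exact: xf.
  apply: (@le_trans _ _ (f x + s%:E * h x)); last first.
    by apply: geeDl; apply: mule_ge0_le0; rewrite ?lee_fin.
  apply: ereal_inf_lbound; exists x => //; split; rewrite /edom /=.
    by rewrite ltey.
  exact: (le_lt_trans hx0 (ltry 0%R)).
have sup_le : ereal_sup [set dual_fun f F s | s in [set s : R | (0 <= s)%R]]
    <= pert_value f F 0.
  by apply: ge_ereal_sup => _ [s s0 <-]; exact: dual_le.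
case EP: (pert_value f F 0) => [m| |].
- have feas : forall x, h x <= 0 -> m%:E <= f x.
    move=> x hx0; rewrite -EP; apply: ereal_inf_lbound; exists x => // t.
    exact: le_trans (hge t x) hx0.
  have key : exists s0 : R, (0 <= s0)%R /\ forall x, edom f x -> edom h x ->
      m%:E <= f x + s0%:E * h x.
    pose B := [set r : R | exists y (fy hy : R), f y = fy%:E /\ h y = hy%:E /\ (hy < 0)%R /\ (r = (fy - m) / (- hy))%R].
    have [fa Efa] := fin_of (fnm a) afa.
    have [ha Eha] := fin_of (hnm a) (le_lt_trans Ah (ltry _)).
    have hane : (ha < 0)%R.
      move: Ah; rewrite Eha lee_fin => /le_lt_trans; apply.
      by rewrite oppr_lt0.
    have Bne : B !=set0 by exists ((fa - m) / (- ha))%R; exists a, fa, ha.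
    have Blb : lbound B 0%R.
      move=> _ [y [fy [hy [Efy [Ehy [hy0 ->]]]]]].
      have : m%:E <= f y by apply: feas; rewrite Ehy lee_fin ltW.
      rewrite Efy lee_fin => mfy.
      by apply: divr_ge0; rewrite ?subr_ge0 ?oppr_ge0 // ltW.
    have Bhl : has_lbound B by exists 0%R.
    exists (inf B); split; first exact: lb_le_inf.
    move=> x fx_ hx_.
    have [fx Efx] := fin_of (fnm x) fx_.
    have [hx Ehx] := fin_of (hnm x) hx_.
    rewrite Efx Ehx -EFinM -EFinD lee_fin.
    case: (ltrgtP hx 0%R) => hxs.
    + have : (inf B <= (fx - m) / (- hx))%R.
        by apply: ge_inf => //; exists x, fx, hx.
      rewrite ler_pdivlMr ?oppr_gt0 // => H.
      nra.
    + have : ((m - fx) / hx <= inf B)%R; last first.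
        by rewrite ler_pdivrMr // => H; nra.
      apply: lb_le_inf => // _ [y [fy [hy [Efy [Ehy [hy0 ->]]]]]].
      pose d := (hx - hy)%R.
      have d0 : (0 < d)%R by rewrite /d; lra.
      pose l := (- hy / d)%R.
      have e1 : (l * d = - hy)%R by rewrite /l divfK // (negbT (gt_eqF d0)).
      have e2 : ((1 - l) * d = hx)%R by rewrite mulrBl e1 mul1r /d; lra.
      have l0 : (0 < l)%R by rewrite /l divr_gt0 // oppr_gt0.
      have l1 : (l < 1)%R.
        by rewrite /l ltr_pdivrMr // mul1r /d; lra.
      have hl : (0 < l < 1)%R by rewrite l0 l1.
      have hz := hcvx x y l hl.
      rewrite Ehx Ehy -!EFinM -EFinD in hz.
      have hz0 : (l * hx + (1 - l) * hy = 0)%R.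
        apply: (mulIf (negbT (gt_eqF d0))); rewrite mul0r mulrDl.
        by rewrite mulrAC e1 mulrAC e2; lra.
      rewrite hz0 in hz.
      have := le_trans (feas _ hz) (fcvx x y l hl).
      rewrite Efx Efy -!EFinM -EFinD lee_fin => H.
      have H2 : (m * d <= l * d * fx + (1 - l) * d * fy)%R by nra.
      rewrite e1 e2 /d in H2.
      rewrite ler_pdivrMr // mulrAC ler_pdivlMr ?oppr_gt0 //.
      nra.
    + have : m%:E <= f x by apply: feas; rewrite Ehx hxs.
      by rewrite Efx lee_fin hxs mulr0 addr0.
  case: key => s0 [s00 Hs0].
  have ge_m : m%:E <= dual_fun f F s0.
    by apply: le_ereal_inf_tmp => _ [x [xf xh] <-]; exact: Hs0.
  have dm : dual_fun f F s0 = m%:E.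
    by apply/le_anti; rewrite ge_m -EP dual_le.
  have supm : ereal_sup [set dual_fun f F s | s in [set s : R | (0 <= s)%R]] = m%:E.
    apply/le_anti; rewrite -EP sup_le /= EP -dm.
    by apply: ereal_sup_ubound; exists s0.
  rewrite supm; split; first by exists s0.
  split => //.
  apply: (@squeeze_cvge _ _ _ _ (fun e => (m - s0 * e)%R%:E) _ (fun _ => m%:E)).
  + near=> e; apply/andP; split; last first.
      by rewrite -EP; apply: pmono; near: e; apply: nbhs_right_ge.
    have e0 : (0 <= e)%R by near: e; apply: nbhs_right_ge.
    apply: le_ereal_inf_tmp => _ [x xf <-].
    have [fxoo|fxlt] := eqVneq (f x) +oo; first by rewrite fxoo leey.
    have hxe : h x <= e%:E by apply: ge_ereal_sup => _ [t _ <-]; exact: xf.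
    have fxlt' : f x < +oo by rewrite ltey.
    have hxlt : h x < +oo by apply: le_lt_trans hxe (ltry _).
    have [fx Efx] := fin_of (fnm x) fxlt'.
    have [hx Ehx] := fin_of (hnm x) hxlt.
    have := Hs0 x fxlt' hxlt.
    rewrite Efx Ehx -EFinM -EFinD !lee_fin.
    move: hxe; rewrite Ehx lee_fin => hxe H.
    nra.
  + apply: cvg_EFin; first exact: nearW.
    rewrite (_ : fine \o _ = (fun e : R => m - s0 * e)%R) //.
    have H : ((m - s0 * e)%R @[e --> 0%R] --> m).
      rewrite -[X in _ --> X]subr0 -[X in (_ - X)%R](mulr0 s0).
      apply: cvgB; first exact: cvg_cst.
      apply: cvgMr; exact: cvg_id.
    exact: (cvg_at_right_filter H).
  + exact: cvg_cst.
- exfalso.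
  have : pert_value f F 0 <= f a by apply: ereal_inf_lbound; exists a.
  by rewrite EP leye_eq => /eqP fa; move: afa; rewrite /edom /= fa.
- rewrite EP leeNy_eq in sup_le; rewrite (eqP sup_le).
  split; first by exists 0%R; split => //; apply/eqP; rewrite -leeNy_eq -EP; exact: dual_le.
  split => //.
  apply: cvg_near_cst; near=> e.
  apply/eqP; rewrite -leeNy_eq -EP; apply: pmono.
  near: e; by apply: nbhs_right_ge.
Unshelve. all: by end_near.
Qed.
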